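(* Let $n\ge3$ and $3\le j\le n$ be integers and let $\alpha\in I_{j,n}$. Then the coefficient $c^{(n)}_\alpha$ is non-negative if $j$ is even and non-positive if $j$ is odd.
   Context: Let $T_1,T_2,\dots$ be indeterminates, $T_\alpha=T_{\alpha_1}\cdots T_{\alpha_d}$. Define linear operators $L,H$ on monomials (constants sent to $0$): $L(T_{\alpha_1}\cdots T_{\alpha_r})=\sum_{1\le i<j\le r}T_{\alpha_1}\cdots T_{\alpha_i+1}\cdots T_{\alpha_j+1}\cdots T_{\alpha_r}$, $H(T_{\alpha_1}\cdots T_{\alpha_r})=-\frac12\sum_{k=1}^{r}\sum_{l=1}^{\alpha_k-1}\binom{\alpha_k}{l}T_{1+l}T_{1+\alpha_k-l}\prod_{i\ne k}T_{\alpha_i}$. For $n\ge2$ let $A_n=-\sum_{k=1}^{n-1}\binom{n}{k}T_{1+k}T_{1+n-k}T_n$; set $R_2=0$, $R_{n+1}=A_n+L(R_n)+H(R_n)$. $I_{j,n}$ is the set of non-increasing $j$-tuples of integers in $\{2,\dots,n-1\}$ with sum $2n$, and $c^{(n)}_\alpha$ is the coefficient of the monomial $T_\alpha$ in $R_n$. *)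

(* Defs.v *)
From mathcomp Require Import all_boot all_order all_algebra.
Set Implicit Arguments. Unset Strict Implicit. Unset Printing Implicit Defensive.
Import Order.TTheory GRing.Theory Num.Theory.
Local Open Scope ring_scope.

(* Polynomials in T_1, T_2, ... with rational coefficients are represented as
   formal finite sums: a list of (coefficient, monomial) pairs, where the
   monomial T_{a_1} ... T_{a_r} is the sequence [:: a_1; ...; a_r].
   Two monomials are equal iff their sequences are permutations of each
   other (the T_i commute). *)
Definition mono := seq nat.
Definition tpoly := seq (rat * mono).

Definition coef (p : tpoly) (alpha : mono) : rat :=
  \sum_(t <- p | perm_eq t.2 alpha) t.1.

Definition linext (f : mono -> tpoly) (p : tpoly) : tpoly :=
  flatten [seq [seq (t.1 * u.1, u.2) | u <- f t.2] | t <- p].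

Definition incr2 (m : mono) (i j : nat) : mono :=
  [seq (nth 0%N m t + ((t == i) || (t == j)))%N | t <- iota 0 (size m)].

Definition Lmono (m : mono) : tpoly :=
  [seq (1, incr2 m i j) | i <- iota 0 (size m), j <- iota i.+1 (size m - i.+1)].

Definition Hmono (m : mono) : tpoly :=
  [seq (- ('C(nth 0%N m k, l))%:R / 2,
        [:: l.+1; (nth 0%N m k - l).+1] ++ (take k m ++ drop k.+1 m))
  | k <- iota 0 (size m), l <- iota 1 (nth 0%N m k).-1].

Definition Lop := linext Lmono.
Definition Hop := linext Hmono.

Definition Apoly (n : nat) : tpoly :=
  [seq (- ('C(n, k))%:R, [:: k.+1; (n - k).+1; n]) | k <- iota 1 n.-1].

(* Rseq k = R_{k+2} *)
Fixpoint Rseq (k : nat) : tpoly :=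
  match k with
  | 0 => [::]
  | k'.+1 => Apoly k'.+2 ++ Lop (Rseq k') ++ Hop (Rseq k')
  end.

Definition Rpoly (n : nat) : tpoly := Rseq (n - 2).

Definition in_I (j n : nat) (alpha : mono) : bool :=
  [&& size alpha == j, sorted geq alpha,
      all (fun a => (2 <= a <= n.-1)%N) alpha & sumn alpha == (2 * n)%N].

(* Main.v *)
Require Import Defs.
From mathcomp Require Import all_boot all_order all_algebra.
Import Order.TTheory GRing.Theory Num.Theory.
Local Open Scope ring_scope.

Definition sgm (m : mono) : rat := (-1) ^+ size m.

Definition goodt (t : rat * mono) : bool := 0 <= t.1 * sgm t.2.

Lemma sgm2 m : sgm m * sgm m = 1.
Proof. by rewrite /sgm -exprMn mulrNN mulr1 expr1n. Qed.

Lemma linext_good (f : mono -> tpoly) p :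
  (forall m u, u \in f m -> 0 <= u.1 * sgm u.2 * sgm m) ->
  all goodt p -> all goodt (linext f p).
Proof.
move=> Hf /allP Hp; apply/allP => x /flattenP [s /mapP [t tp ->] /mapP [u uf ->]].
rewrite /goodt /=.
have -> : t.1 * u.1 * sgm u.2 = (t.1 * sgm t.2) * (u.1 * sgm u.2 * sgm t.2).
  have := sgm2 t.2; set a := sgm t.2 => Ha.
  by rewrite [RHS]mulrC -!mulrA [a * _]mulrC -!mulrA Ha mulr1 mulrC -mulrA [sgm _ * _]mulrC mulrA.
apply: mulr_ge0; [exact: Hp | exact: Hf].
Qed.

Lemma L_good m u : u \in Lmono m -> 0 <= u.1 * sgm u.2 * sgm m.
Proof.
case/allpairsPdep => i [j [_ _ ->]] /=.
by rewrite mul1r /sgm /incr2 size_map size_iota -exprD -signr_odd addnn odd_double expr0.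
Qed.

Lemma H_good m u : u \in Hmono m -> 0 <= u.1 * sgm u.2 * sgm m.
Proof.
case/allpairsPdep => k [l [kin _ ->]] /=.
rewrite mem_iota add0n in kin; case/andP: kin => _ kin.
have -> : sgm ([:: l.+1; (nth 0%N m k - l).+1] ++ (take k m ++ drop k.+1 m)) = - sgm m.
  rewrite /sgm size_cat size_cat size_take size_drop kin /=.
  have -> : (2 + (k + (size m - k.+1)) = (size m).+1)%N by rewrite add2n -addSn subnKC.
  by rewrite exprS mulN1r.
rewrite -mulrA (mulNr (sgm m)) sgm2 mulrN1 mulNr opprK.
by apply: divr_ge0 => //; apply: ler0n.
Qed.

Lemma A_good n : all goodt (Apoly n).
Proof.
apply/allP => x /mapP [k _ ->]; rewrite /goodt /sgm /= -signr_odd /= expr1 mulrN1 opprK.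
exact: ler0n.
Qed.

Lemma R_good k : all goodt (Rseq k).
Proof.
elim: k => [//|k IH].
have -> : Rseq k.+1 = Apoly k.+2 ++ Lop (Rseq k) ++ Hop (Rseq k) by [].
rewrite !all_cat (A_good k.+2) /=; apply/andP; split.
  exact: linext_good L_good IH.
exact: linext_good H_good IH.
Qed.

Theorem mainTheorem10 (n j : nat) (alpha : seq nat) :
  (3 <= n)%N -> (3 <= j <= n)%N -> in_I j n alpha ->
  if ~~ odd j then 0 <= coef (Rpoly n) alpha else coef (Rpoly n) alpha <= 0.
Proof.
move=> _ _ /and4P [/eqP sz _ _ _].
have G := R_good (n - 2); rewrite /coef /Rpoly.
have key : forall t, t \in Rseq (n - 2) -> perm_eq t.2 alpha -> 0 <= t.1 * (-1) ^+ j.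
  move=> t tin pe; move/allP: G => /(_ t tin); rewrite /goodt /sgm (perm_size pe) sz //.
rewrite big_seq_cond.
case: ifP => hj.
  apply: sumr_ge0 => t /andP [tin pe]; have := key t tin pe.
  by rewrite -signr_odd (negbTE hj) expr0 mulr1.
apply: sumr_le0 => t /andP [tin pe]; have := key t tin pe.
rewrite -signr_odd (negbFE hj) expr1 mulrN1 oppr_ge0 //.
Qed.
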